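(* Let $\lambda_1,\ldots,\lambda_L>0$ and consider the convex program $$\min_{\{\hat\lambda_\ell,\gamma_\ell\}}\ \frac12\sum_{\ell=1}^L\log\frac{\lambda_\ell}{\gamma_\ell}\ \text{ s.t. } 0<\gamma_\ell\le\lambda_\ell,\ 0\le\hat\lambda_\ell,\ \sum_{\ell}D_\ell(\gamma_\ell,\hat\lambda_\ell)\le D,\ \sum_\ell P_\ell(\hat\lambda_\ell)\le P,$$ with $D_\ell(\gamma_\ell,\hat\lambda_\ell)=\lambda_\ell-2\sqrt{\hat\lambda_\ell(\lambda_\ell-\gamma_\ell)}+\hat\lambda_\ell$ and $P_\ell(\hat\lambda_\ell)=(\sqrt{\lambda_\ell}-\sqrt{\hat\lambda_\ell})^2$. Let $(D,P)$ be strictly feasible. Then the optimal solution $\{\gamma^*_\ell(D,P),\hat\lambda^*_\ell(D,P)\}$ is as follows: (1) If both the distortion and perception constraints are active, then there exist $\nu_1,\nu_2>0$ such that, for every $\ell$, $$\gamma^*_\ell(D,P)=\frac{\theta_\ell}{2\nu_1},\qquad \hat\lambda^*_\ell(D,P)=\frac{\lambda_\ell}{\big(1+\frac{(1-\theta_\ell)\nu_1}{\nu_2}\big)^2},$$ where $\theta_\ell$ is the unique solution of $\frac{\theta_\ell}{1+\frac{(1-\theta_\ell)\nu_1}{\nu_2}}=\sqrt{1-\frac{\theta_\ell}{2\nu_1\lambda_\ell}}$, and $\nu_1,\nu_2$ are such that $\sum_\ell D_\ell(\gamma^*_\ell(D,P),\hat\lambda^*_\ell(D,P))=D$ and $\sum_\ell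 P_\ell(\hat\lambda^*_\ell(D,P))=P$. In this case every component has positive rate, i.e., $\gamma^*_\ell(D,P)<\lambda_\ell$ for all $\ell$. (2) If the distortion constraint is active but the perception constraint is inactive, then there exists $\nu_1>0$ with $\sum_{\ell}[\lambda_\ell-\frac{1}{2\nu_1}]^+=[\sum_\ell\lambda_\ell-D]^+$ such that $\gamma^*_\ell(D,P)=\min\{\frac{1}{2\nu_1},\lambda_\ell\}$ and $\hat\lambda^*_\ell(D,P)=\lambda_\ell-\min\{\frac{1}{2\nu_1},\lambda_\ell\}$. (3) If the distortion constraint is inactive, then $\gamma^*_\ell(D,P)=\lambda_\ell$ for all $\ell$ (every component has zero rate), and $(\hat\lambda^*_\ell(D,P))_\ell$ can be any vector in the set $\{(\hat\lambda_\ell)_\ell:\ \sum_\ell P_\ell(\hat\lambda_\ell)\le P,\ \sum_\ell(\lambda_\ell+\hat\lambda_\ell)\le D,\ \hat\lambda_\ell\ge0\}$.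
   Context: This program equals the rate-distortion-perception function of an $L$-dimensional zero-mean Gaussian vector source with covariance eigenvalues $\lambda_\ell$, squared-error distortion and squared Wasserstein-2 perception loss; the rate of component $\ell$ is $\frac12\log\frac{\lambda_\ell}{\gamma_\ell}$. $[x]^+=\max\{0,x\}$; logs are natural. $(D,P)$ strictly feasible means there is a feasible point satisfying the distortion and perception constraints with strict inequality. A constraint is inactive if the program with that constraint removed (all others kept) has at least one optimal solution satisfying all the original constraints; otherwise it is active. *)

(* Defs.v *)
From HB Require Import structures.
From mathcomp Require Import all_boot all_order all_algebra.
From mathcomp Require Import reals exp.
Set Implicit Arguments. Unset Strict Implicit. Unset Printing Implicit Defensive.
Import Order.TTheory GRing.Theory Num.Theory.
Local Open Scope ring_scope.

Section RDP.
Variables (R : realType) (L : nat) (lam : 'I_L -> R).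

Definition Dl (l g lh : R) : R := l - 2 * Num.sqrt (lh * (l - g)) + lh.
Definition Pl (l lh : R) : R := (Num.sqrt l - Num.sqrt lh) ^+ 2.

Definition rate_obj (g : 'I_L -> R) : R :=
  2^-1 * \sum_(i < L) ln (lam i / g i).

Definition box_cons (g lh : 'I_L -> R) : Prop :=
  forall i, 0 < g i /\ g i <= lam i /\ 0 <= lh i.
Definition dist_cons (D : R) (g lh : 'I_L -> R) : Prop :=
  \sum_(i < L) Dl (lam i) (g i) (lh i) <= D.
Definition perc_cons (P : R) (lh : 'I_L -> R) : Prop :=
  \sum_(i < L) Pl (lam i) (lh i) <= P.

Definition feasible (D P : R) (g lh : 'I_L -> R) : Prop :=
  box_cons g lh /\ dist_cons D g lh /\ perc_cons P lh.
Definition feasible_noD (P : R) (g lh : 'I_L -> R) : Prop :=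
  box_cons g lh /\ perc_cons P lh.
Definition feasible_noP (D : R) (g lh : 'I_L -> R) : Prop :=
  box_cons g lh /\ dist_cons D g lh.

Definition optimal (F : ('I_L -> R) -> ('I_L -> R) -> Prop) (g lh : 'I_L -> R)
  : Prop :=
  F g lh /\ forall g' lh', F g' lh' -> rate_obj g <= rate_obj g'.

Definition strictly_feasible (D P : R) : Prop :=
  exists g lh, box_cons g lh /\
    \sum_(i < L) Dl (lam i) (g i) (lh i) < D /\
    \sum_(i < L) Pl (lam i) (lh i) < P.

Definition inactive_D (D P : R) : Prop :=
  exists g lh, optimal (feasible_noD P) g lh /\ feasible D P g lh.
Definition inactive_P (D P : R) : Prop :=
  exists g lh, optimal (feasible_noP D) g lh /\ feasible D P g lh.
Definition active_D (D P : R) : Prop := ~ inactive_D D P.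
Definition active_P (D P : R) : Prop := ~ inactive_P D P.

End RDP.

Definition pospart (R : realType) (x : R) : R := Num.max 0 x.

(* theta satisfies  theta/(1+(1-theta) nu1/nu2) = sqrt(1 - theta/(2 nu1 l)),
   with both sides defined (denominator nonzero, radicand nonnegative) *)
Definition theta_eq (R : realType) (nu1 nu2 l t : R) : Prop :=
  1 + (1 - t) * nu1 / nu2 != 0 /\ 0 <= 1 - t / (2 * nu1 * l) /\
  t / (1 + (1 - t) * nu1 / nu2) = Num.sqrt (1 - t / (2 * nu1 * l)).

Definition theta_unique_sol (R : realType) (nu1 nu2 l t : R) : Prop :=
  theta_eq nu1 nu2 l t /\ forall t', theta_eq nu1 nu2 l t' -> t' = t.

(* Main.v *)
Require Import Defs.
From HB Require Import structures.
From mathcomp Require Import all_boot all_order all_algebra.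
From mathcomp Require Import reals exp.
From mathcomp Require Import all_classical all_reals all_analysis.
From mathcomp Require Import ring lra.
Import Order.TTheory GRing.Theory Num.Theory.
Import numFieldNormedType.Exports.
Local Open Scope ring_scope.

Section Basic.
Variable R : realType.
Implicit Types (x y z t a b l g h u w : R).

Lemma sqrt_sq_ge u w : 0 <= u -> u ^+ 2 <= w -> u <= Num.sqrt w.
Proof.
move=> u0 uw; rewrite -(ger0_norm u0) -sqrtr_sqr.
exact: ler_wsqrtr.
Qed.

Lemma Dl_dec l g h : 0 <= h -> g <= l ->
  Dl l g h = g + (Num.sqrt h - Num.sqrt (l - g)) ^+ 2.
Proof.
move=> h0 gl; rewrite /Dl sqrtrM //.
have lg : 0 <= l - g by rewrite subr_ge0.
rewrite sqrrB !sqr_sqrtr //; ring.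
Qed.

Lemma Pl_Dl l h : 0 <= h -> 0 <= l -> Pl l h = Dl l 0 h.
Proof.
move=> h0 l0; rewrite /Pl /Dl subr0 sqrtrM // sqrrB !sqr_sqrtr //; ring.
Qed.

Lemma ln_le_sub1 x : 0 < x -> ln x <= x - 1.
Proof.
move=> x0; have := @le_ln1Dx R (x - 1).
have -> : 1 + (x - 1) = x by ring.
apply; lra.
Qed.

Lemma ln_lt_sub1 x : 0 < x -> x != 1 -> ln x < x - 1.
Proof.
move=> x0 x1; have := @expR_gt1Dx R (x - 1); rewrite subr_eq0 => /(_ x1).
have -> : 1 + (x - 1) = x by ring.
move=> h.
by rewrite -(expRK (x - 1)) ltr_ln // posrE expR_gt0.
Qed.

Lemma sqrt_conc t (a1 a2 b1 b2 : R) : 0 <= t <= 1 ->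
  0 <= a1 -> 0 <= a2 -> 0 <= b1 -> 0 <= b2 ->
  t * Num.sqrt (a1 * b1) + (1 - t) * Num.sqrt (a2 * b2) <=
  Num.sqrt ((t * a1 + (1 - t) * a2) * (t * b1 + (1 - t) * b2)).
Proof.
move=> /andP[t0 t1] a10 a20 b10 b20.
rewrite (sqrtrM _ a10) (sqrtrM _ a20).
have t1' : 0 <= 1 - t by rewrite subr_ge0.
apply: sqrt_sq_ge.
  by apply: addr_ge0; apply: mulr_ge0 => //; apply: mulr_ge0; apply: sqrtr_ge0.
rewrite -[in X in _ <= X](sqr_sqrtr a10) -[in X in _ <= X](sqr_sqrtr a20).
rewrite -[in X in _ <= X](sqr_sqrtr b10) -[in X in _ <= X](sqr_sqrtr b20).
set x1 := Num.sqrt a1; set x2 := Num.sqrt a2; set y1 := Num.sqrt b1; set y2 := Num.sqrt b2.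
rewrite -subr_ge0.
have -> : (t * x1 ^+ 2 + (1 - t) * x2 ^+ 2) * (t * y1 ^+ 2 + (1 - t) * y2 ^+ 2) -
  (t * (x1 * y1) + (1 - t) * (x2 * y2)) ^+ 2 = t * (1 - t) * (x1 * y2 - x2 * y1) ^+ 2 by ring.
by apply: mulr_ge0; [apply: mulr_ge0|apply: sqr_ge0].
Qed.

Lemma Dl_conv l t (g1 g2 h1 h2 : R) : 0 <= t <= 1 -> g1 <= l -> g2 <= l ->
  0 <= h1 -> 0 <= h2 ->
  Dl l (t * g1 + (1 - t) * g2) (t * h1 + (1 - t) * h2) <=
  t * Dl l g1 h1 + (1 - t) * Dl l g2 h2.
Proof.
move=> t01 g1l g2l h10 h20.
have e : l - (t * g1 + (1 - t) * g2) = t * (l - g1) + (1 - t) * (l - g2) by ring.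
have l1 : 0 <= l - g1 by rewrite subr_ge0.
have l2 : 0 <= l - g2 by rewrite subr_ge0.
have hs := sqrt_conc _ _ _ _ _ t01 h10 h20 l1 l2.
rewrite /Dl e; move: hs.
set S := Num.sqrt _; set S1 := Num.sqrt _; set S2 := Num.sqrt _.
move=> hs.
lra.
Qed.

Lemma ln_conc t a b : 0 <= t <= 1 -> 0 < a -> 0 < b ->
  t * ln a + (1 - t) * ln b <= ln (t * a + (1 - t) * b).
Proof.
move=> /andP[t0 t1] a0 b0.
have t1' : 0 <= 1 - t by rewrite subr_ge0.
set z := t * a + (1 - t) * b.
have z0 : 0 < z.
  rewrite /z; have [->|tn0] := eqVneq t 0; first by rewrite mul0r add0r subr0 mul1r.
  by apply: ltr_pwDl; [apply: mulr_gt0 => //; rewrite lt0r tn0 | apply: mulr_ge0 => //; exact: ltW].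
have ha := ln_le_sub1 _ (divr_gt0 a0 z0).
have hb := ln_le_sub1 _ (divr_gt0 b0 z0).
rewrite ln_div ?posrE // in ha; rewrite ln_div ?posrE // in hb.
have : t * (ln a - ln z) + (1 - t) * (ln b - ln z) <= t * (a / z - 1) + (1 - t) * (b / z - 1).
  by apply: lerD; apply: ler_wpM2l.
have -> : t * (a / z - 1) + (1 - t) * (b / z - 1) = z / z - 1 by rewrite /z; field; rewrite gt_eqF.
rewrite divff ?gt_eqF // subrr.
move=> h; lra.
Qed.


Lemma div_le_div a b c' d : 0 < b -> 0 < d -> a * d <= c' * b -> a / b <= c' / d.
Proof.
move=> b0 d0 h; rewrite ler_pdivrMr // mulrAC ler_pdivlMr //.
Qed.

Lemma mult1 (T : Type) (C : T -> Prop) (f hh : T -> R) (x : T) (c : R) :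
  C x -> (forall y : T, C y -> hh y <= c -> f x <= f y) ->
  (exists y : T, C y /\ hh y < c) ->
  (forall (y1 y2 : T) t, C y1 -> C y2 -> 0 <= t <= 1 -> exists z : T, C z /\
     f z <= t * f y1 + (1 - t) * f y2 /\ hh z <= t * hh y1 + (1 - t) * hh y2) ->
  exists nu, 0 <= nu /\ forall y : T, C y -> f x <= f y + nu * (hh y - c).
Proof.
move=> Cx opt [y0 [Cy0 hy0]] comb.
pose A := [set a : R | exists y : T, [/\ C y, hh y < c & a = (f y - f x) / (c - hh y)]]%classic.
have A0 : (A !=set0)%classic by exists ((f y0 - f x) / (c - hh y0)), y0.
have Alb : forall a, A a -> 0 <= a.
  move=> _ [y [Cy hy ->]]; apply: divr_ge0; rewrite subr_ge0; last exact: ltW.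
  by apply: opt => //; exact: ltW.
exists (inf A); split; first by apply: lb_le_inf.
move=> y Cy.
case: (ltgtP (hh y) c) => hy.
- have : inf A <= (f y - f x) / (c - hh y).
    by apply: ge_inf; [exists 0 | exists y].
  rewrite ler_pdivlMr ?subr_gt0 // => h; lra.
- suff : (f x - f y) / (hh y - c) <= inf A.
    rewrite ler_pdivrMr ?subr_gt0 // => h; lra.
  apply: lb_le_inf => // _ [y1 [Cy1 hy1 ->]].
  have d0 : 0 < hh y - hh y1 by lra.
  pose t := (hh y - c) / (hh y - hh y1).
  have t01 : 0 <= t <= 1.
    apply/andP; split; first by apply: divr_ge0; lra.
    by rewrite ler_pdivrMr // mul1r; lra.
  have [z [Cz [fz hz]]] := comb y1 y t Cy1 Cy t01.
  have e1 : t * hh y1 + (1 - t) * hh y = c by rewrite /t; field; rewrite gt_eqF.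
  have fxz : f x <= f z by apply: opt => //; rewrite -e1.
  have e2 : t * f y1 + (1 - t) * f y =
     ((hh y - c) * f y1 + (c - hh y1) * f y) / (hh y - hh y1).
    by rewrite /t; field; rewrite gt_eqF.
  have := le_trans fxz fz; rewrite e2 ler_pdivlMr // => h.
  apply: div_le_div; rewrite ?subr_gt0 //; lra.
- by rewrite hy subrr mulr0 addr0; apply: opt => //; rewrite hy.
Qed.

End Basic.

Set Implicit Arguments.
Unset Strict Implicit.
Section RDP.
Variables (R : realType) (L : nat) (lam : 'I_L -> R).
Hypothesis Hlam : forall i, 0 < lam i.

Definition Dsum (g lh : 'I_L -> R) := \sum_(i < L) Dl (lam i) (g i) (lh i).
Definition Psum (lh : 'I_L -> R) := \sum_(i < L) Pl (lam i) (lh i).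
Definition conv (t : R) (a b : 'I_L -> R) := fun i => t * a i + (1 - t) * b i.

Lemma box_conv t g1 g2 h1 h2 : 0 <= t <= 1 -> box_cons lam g1 h1 -> box_cons lam g2 h2 ->
  box_cons lam (conv t g1 g2) (conv t h1 h2).
Proof.
move=> /andP[t0 t1] b1 b2 i; have [g1p [g1l h1p]] := b1 i; have [g2p [g2l h2p]] := b2 i.
have t1' : 0 <= 1 - t by rewrite subr_ge0.
rewrite /conv; split; [|split].
- have [->|tn0] := eqVneq t 0; first by rewrite mul0r add0r subr0 mul1r.
  apply: ltr_pwDl; first by apply: mulr_gt0 => //; rewrite lt0r tn0.
  by apply: mulr_ge0 => //; exact: ltW.
- have := ler_wpM2l t0 g1l; have := ler_wpM2l t1' g2l; lra.
- by apply: addr_ge0; apply: mulr_ge0.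
Qed.

Lemma Dsum_conv t g1 g2 h1 h2 : 0 <= t <= 1 -> box_cons lam g1 h1 -> box_cons lam g2 h2 ->
  Dsum (conv t g1 g2) (conv t h1 h2) <= t * Dsum g1 h1 + (1 - t) * Dsum g2 h2.
Proof.
move=> t01 b1 b2; rewrite /Dsum !mulr_sumr -big_split /=; apply: ler_sum => i _.
have [g1p [g1l h1p]] := b1 i; have [g2p [g2l h2p]] := b2 i.
exact: (@Dl_conv R).
Qed.

Lemma Psum_conv t h1 h2 : 0 <= t <= 1 -> (forall i, 0 <= h1 i) -> (forall i, 0 <= h2 i) ->
  Psum (conv t h1 h2) <= t * Psum h1 + (1 - t) * Psum h2.
Proof.
move=> t01 b1 b2; rewrite /Psum !mulr_sumr -big_split /=; apply: ler_sum => i _.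
have l0 : 0 <= lam i by exact: ltW.
have hz : 0 <= conv t h1 h2 i.
  move: t01 => /andP[t0 t1]; rewrite /conv; apply: addr_ge0; apply: mulr_ge0 => //.
  by rewrite subr_ge0.
rewrite !Pl_Dl //.
have := @Dl_conv R _ _ _ _ _ _ t01 (ltW (Hlam i)) (ltW (Hlam i)) (b1 i) (b2 i).
by rewrite !mulr0 addr0.
Qed.

Lemma ln_ratio (l g : R) : 0 < l -> 0 < g -> ln (l / g) = ln l - ln g.
Proof. by move=> l0 g0; rewrite ln_div ?posrE. Qed.

Lemma rate_conv t g1 g2 h1 h2 : 0 <= t <= 1 -> box_cons lam g1 h1 -> box_cons lam g2 h2 ->
  rate_obj lam (conv t g1 g2) <= t * rate_obj lam g1 + (1 - t) * rate_obj lam g2.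
Proof.
move=> t01 b1 b2; rewrite /rate_obj.
have -> : t * (2^-1 * \sum_(i < L) ln (lam i / g1 i)) +
  (1 - t) * (2^-1 * \sum_(i < L) ln (lam i / g2 i)) =
  2^-1 * (t * \sum_(i < L) ln (lam i / g1 i) + (1 - t) * \sum_(i < L) ln (lam i / g2 i)) by ring.
apply: ler_wpM2l; first by rewrite invr_ge0.
rewrite !mulr_sumr -big_split /=; apply: ler_sum => i _.
have [g1p _] := b1 i; have [g2p _] := b2 i.
have [gp _] := box_conv t01 b1 b2 i.
rewrite !ln_ratio //.
have := @ln_conc R _ _ _ t01 g1p g2p; rewrite /conv => h; lra.
Qed.

Lemma rate_ge0 g lh : box_cons lam g lh -> 0 <= rate_obj lam g.
Proof.
move=> b; rewrite /rate_obj; apply: mulr_ge0; first by rewrite invr_ge0.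
apply: sumr_ge0 => i _; have [gp [gl _]] := b i; apply: ln_ge0.
by rewrite ler_pdivlMr // mul1r.
Qed.

Lemma rate_lam : rate_obj lam lam = 0.
Proof.
rewrite /rate_obj big1 ?mulr0 // => i _.
by rewrite divff ?ln1 // gt_eqF.
Qed.

Lemma rate_eq0 g lh : box_cons lam g lh -> rate_obj lam g = 0 -> forall i, g i = lam i.
Proof.
move=> b e i.
have Hnn : forall j : 'I_L, true -> 0 <= ln (lam j / g j).
  move=> j _; have [gjp [gjl _]] := b j; apply: ln_ge0.
  by rewrite ler_pdivlMr // mul1r.
have h : \sum_(j < L) ln (lam j / g j) = 0.
  by move: e; rewrite /rate_obj => /eqP; rewrite mulf_eq0 invr_eq0 pnatr_eq0 /= => /eqP.
have [gp [gl _]] := b i.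
have := @psumr_eq0P _ _ _ _ Hnn h i isT.
move/eqP; rewrite ln_eq0; last by rewrite divr_gt0.
move/eqP => e'; have gn : g i != 0 by rewrite gt_eqF.
by rewrite -[lam i](divfK gn) e' mul1r.
Qed.


Lemma comb_lem t g1 h1 g2 h2 : 0 <= t <= 1 -> box_cons lam g1 h1 -> box_cons lam g2 h2 ->
  [/\ box_cons lam (conv t g1 g2) (conv t h1 h2),
   Dsum (conv t g1 g2) (conv t h1 h2) <= t * Dsum g1 h1 + (1 - t) * Dsum g2 h2,
   rate_obj lam (conv t g1 g2) <= t * rate_obj lam g1 + (1 - t) * rate_obj lam g2 &
   Psum (conv t h1 h2) <= t * Psum h1 + (1 - t) * Psum h2].
Proof.
move=> t01 b1 b2; split.
- exact: box_conv.
- exact: Dsum_conv.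
- exact: rate_conv.
- by apply: Psum_conv => // i; [case: (b1 i) => _ [] | case: (b2 i) => _ []].
Qed.

Lemma convex_le t (a b c : R) : 0 <= t <= 1 -> a <= c -> b <= c -> t * a + (1 - t) * b <= c.
Proof.
move=> /andP[t0 t1] ac bc.
have t1' : 0 <= 1 - t by rewrite subr_ge0.
have := ler_wpM2l t0 ac; have := ler_wpM2l t1' bc; lra.
Qed.

Lemma lagr D P g lh : strictly_feasible lam D P -> optimal lam (feasible lam D P) g lh ->
  active_D lam D P -> active_P lam D P ->
  exists nu1 nu2, [/\ 0 < nu1, 0 < nu2, Dsum g lh = D, Psum lh = P &
   forall g' lh', box_cons lam g' lh' ->
     rate_obj lam g + nu1 * Dsum g lh + nu2 * Psum lh <=
     rate_obj lam g' + nu1 * Dsum g' lh' + nu2 * Psum lh'].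
Proof.
move=> [g0 [lh0 [b0 [d0 p0]]]] [[bx [dx px]] opt] aD aP.
change (is_true (Dsum g lh <= D)) in dx; change (is_true (Psum lh <= P)) in px.
change (is_true (Dsum g0 lh0 < D)) in d0; change (is_true (Psum lh0 < P)) in p0.
pose T := (('I_L -> R) * ('I_L -> R))%type.
pose C1 := (fun y : T => box_cons lam y.1 y.2 /\ Dsum y.1 y.2 <= D).
have o1 : forall y : T, C1 y -> Psum y.2 <= P -> rate_obj lam g <= rate_obj lam y.1.
  move=> [g' lh'] /= [b' d'] p'; apply: opt; split => //.
have s1 : exists y : T, C1 y /\ Psum y.2 < P.
  by exists (g0, lh0); split => //; split => //; exact: ltW.
have c1 : forall (y1 y2 : T) t, C1 y1 -> C1 y2 -> 0 <= t <= 1 -> exists z : T, C1 z /\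
     rate_obj lam z.1 <= t * rate_obj lam y1.1 + (1 - t) * rate_obj lam y2.1 /\
     Psum z.2 <= t * Psum y1.2 + (1 - t) * Psum y2.2.
  move=> [g1 h1] [g2 h2] t /= [b1 d1] [b2 d2] t01.
  have [bz dz rz pz] := comb_lem t01 b1 b2.
  exists (conv t g1 g2, conv t h1 h2) => /=; split; last by split.
  by split => //; apply: le_trans dz _; apply: convex_le.
have [nu2 [nu2p H1]] := @mult1 R T C1 (fun y => rate_obj lam y.1) (fun y => Psum y.2) (g, lh) P (conj bx dx) o1 s1 c1.
have nu2g : 0 < nu2.
  rewrite lt0r nu2p andbT; apply/eqP => e; apply: aP; exists g, lh; split; last by split.
  split; first by split.
  move=> g' lh' [b' d']; have := H1 (g', lh') (conj b' d'); rewrite e mul0r addr0; exact.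
have PsumE : Psum lh = P.
  have := H1 (g, lh) (conj bx dx) => /= h.
  have : 0 <= nu2 * (Psum lh - P) by lra.
  rewrite pmulr_rge0 // subr_ge0 => h2; apply/eqP; rewrite eq_le h2 px.
  by [].
pose C2 := (fun y : T => box_cons lam y.1 y.2).
pose f2 := (fun y : T => rate_obj lam y.1 + nu2 * (Psum y.2 - P)).
have o2 : forall y : T, C2 y -> Dsum y.1 y.2 <= D -> f2 (g, lh) <= f2 y.
  move=> [g' lh'] /= b' d'; rewrite /f2 /= PsumE subrr mulr0 addr0.
  exact: (H1 (g', lh') (conj b' d')).
have s2 : exists y : T, C2 y /\ Dsum y.1 y.2 < D by exists (g0, lh0).
have c2 : forall (y1 y2 : T) t, C2 y1 -> C2 y2 -> 0 <= t <= 1 -> exists z : T, C2 z /\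
     f2 z <= t * f2 y1 + (1 - t) * f2 y2 /\
     Dsum z.1 z.2 <= t * Dsum y1.1 y1.2 + (1 - t) * Dsum y2.1 y2.2.
  move=> [g1 h1] [g2 h2] t /= b1 b2 t01.
  have [bz dz rz pz] := comb_lem t01 b1 b2.
  exists (conv t g1 g2, conv t h1 h2) => /=; split => //; split => //.
  rewrite /f2 /=; have := ler_wpM2l (ltW nu2g) pz; lra.
have [nu1 [nu1p H2]] := @mult1 R T C2 f2 (fun y => Dsum y.1 y.2) (g, lh) D bx o2 s2 c2.
have nu1g : 0 < nu1.
  rewrite lt0r nu1p andbT; apply/eqP => e; apply: aD; exists g, lh; split; last by split.
  split; first by split.
  move=> g' lh' [b' p']; have := H2 (g', lh') b'; rewrite /f2 /= e mul0r addr0 PsumE subrr mulr0 addr0.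
  have p'' : Psum lh' <= P := p'.
  have := ler_wpM2l (ltW nu2g) p''; lra.
have DsumE : Dsum g lh = D.
  have := H2 (g, lh) bx; rewrite /f2 /= => h.
  have : 0 <= nu1 * (Dsum g lh - D) by lra.
  rewrite pmulr_rge0 // subr_ge0 => h2; apply/eqP; rewrite eq_le h2 dx.
  by [].
exists nu1, nu2; split => // g' lh' b'.
have := H2 (g', lh') b'; rewrite /f2 /= PsumE DsumE; lra.
Qed.


Definition ell (l nu1 nu2 g h : R) := 2^-1 * ln (l / g) + nu1 * Dl l g h + nu2 * Pl l h.
Definition upd (f : 'I_L -> R) j (a : R) := fun i => if i == j then a else f i.

Lemma lagr_split nu1 nu2 g lh : rate_obj lam g + nu1 * Dsum g lh + nu2 * Psum lh =
  \sum_(i < L) ell (lam i) nu1 nu2 (g i) (lh i).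
Proof. by rewrite /rate_obj /Dsum /Psum !mulr_sumr -!big_split. Qed.

Lemma sum_upd (F : 'I_L -> R -> R -> R) g lh j a b :
  \sum_(i < L) F i (upd g j a i) (upd lh j b i) =
  \sum_(i < L) F i (g i) (lh i) - F j (g j) (lh j) + F j a b.
Proof.
rewrite (bigD1 j) //= [X in _ = X - _ + _](bigD1 j) //= /upd eqxx.
rewrite (eq_bigr (fun i => F i (g i) (lh i))); last by move=> i /negbTE ->.
ring.
Qed.

Lemma comp_ineq nu1 nu2 g lh : box_cons lam g lh ->
  (forall g' lh', box_cons lam g' lh' ->
     rate_obj lam g + nu1 * Dsum g lh + nu2 * Psum lh <=
     rate_obj lam g' + nu1 * Dsum g' lh' + nu2 * Psum lh') ->
  forall j a b, 0 < a -> a <= lam j -> 0 <= b ->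
  ell (lam j) nu1 nu2 (g j) (lh j) <= ell (lam j) nu1 nu2 a b.
Proof.
move=> bx H j a b a0 al b0.
have bu : box_cons lam (upd g j a) (upd lh j b).
  by move=> i; rewrite /upd; case: eqP => [->|_] //; apply: bx.
have := H _ _ bu; rewrite !lagr_split.
rewrite (sum_upd (fun i => ell (lam i) nu1 nu2)) /=; lra.
Qed.

End RDP.


Set Implicit Arguments.
Unset Strict Implicit.
Lemma div_mono (R : realType) (a b b' : R) : 0 <= a -> 0 < b -> b <= b' -> a / b' <= a / b.
Proof.
move=> a0 b0 bb; apply: ler_wpM2l => //.
by rewrite lef_pV2 ?posrE //; apply: lt_le_trans bb.
Qed.

Lemma inv_diff (R : realType) (ra rb : R) : 0 < ra -> ra <= rb ->
  ra^-1 - rb^-1 <= (rb ^+ 2 - ra ^+ 2) / ra ^+ 3.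
Proof.
move=> ra0 rab; have rb0 : 0 < rb := lt_le_trans ra0 rab.
have -> : ra^-1 - rb^-1 = (rb - ra) / (ra * rb) by field; rewrite !gt_eqF.
apply: (@div_le_div R); rewrite ?mulr_gt0 ?exprn_gt0 //.
rewrite -subr_ge0.
have -> : (rb ^+ 2 - ra ^+ 2) * (ra * rb) - (rb - ra) * ra ^+ 3 =
  (rb - ra) * ra * (rb ^+ 2 + ra * (rb - ra)) by ring.
have d0 : 0 <= rb - ra by rewrite subr_ge0.
by apply: mulr_ge0; [apply: mulr_ge0 => //; exact: ltW | apply: addr_ge0; [exact: sqr_ge0 | apply: mulr_ge0 => //; exact: ltW]].
Qed.

Section Comp.
Variables (R : realType) (l nu1 nu2 : R).
Hypotheses (l0 : 0 < l) (n10 : 0 < nu1) (n20 : 0 < nu2).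

Let q := Num.sqrt l.
Definition rr (g : R) := Num.sqrt (l - g).
Definition cc := nu1 * nu2 / (nu1 + nu2).
Definition mm (g : R) := (nu1 * rr g + nu2 * q) / (nu1 + nu2).
Definition hf (g : R) := 2^-1 * ln (l / g) + nu1 * g + cc * (q - rr g) ^+ 2.
Definition FF (g : R) := - (2 * g)^-1 + nu1 - cc + cc * q / rr g.

Lemma n12 : 0 < nu1 + nu2. Proof. exact: addr_gt0. Qed.
Lemma n12n : nu1 + nu2 != 0. Proof. by rewrite gt_eqF // n12. Qed.
Lemma cc_gt0 : 0 < cc. Proof. by rewrite /cc divr_gt0 ?mulr_gt0 ?n12. Qed.
Lemma q_gt0 : 0 < q. Proof. by rewrite sqrtr_gt0. Qed.
Lemma q2 : q ^+ 2 = l. Proof. by rewrite sqr_sqrtr // ltW. Qed.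
Lemma rr_ge0 g : 0 <= rr g. Proof. exact: sqrtr_ge0. Qed.
Lemma rr2 g : g <= l -> rr g ^+ 2 = l - g. Proof. by move=> gl; rewrite sqr_sqrtr // subr_ge0. Qed.
Lemma rr_gt0 g : g < l -> 0 < rr g. Proof. by move=> gl; rewrite sqrtr_gt0 subr_gt0. Qed.
Lemma mm_ge0 g : 0 <= mm g.
Proof.
rewrite /mm; apply: divr_ge0; last exact: ltW n12.
by apply: addr_ge0; apply: mulr_ge0; [exact: ltW n10 | exact: rr_ge0 | exact: ltW n20 | exact: sqrtr_ge0].
Qed.

Lemma sqrt_sq (x : R) : 0 <= x -> Num.sqrt (x ^+ 2) = x.
Proof. by move=> x0; rewrite sqrtr_sqr ger0_norm. Qed.

Lemma ell_dec g h : 0 <= h -> g <= l ->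
  ell l nu1 nu2 g h = hf g + (nu1 + nu2) * (Num.sqrt h - mm g) ^+ 2.
Proof.
move=> h0 gl; rewrite /ell (@Dl_dec R _ _ _ h0 gl) /Pl /hf /mm /cc -/q -/(rr g).
by field; rewrite n12n.
Qed.


Lemma s0_eq g0 h0 : 0 < g0 -> g0 <= l -> 0 <= h0 ->
  (forall g h, 0 < g -> g <= l -> 0 <= h -> ell l nu1 nu2 g0 h0 <= ell l nu1 nu2 g h) ->
  Num.sqrt h0 = mm g0.
Proof.
move=> g0p g0l h0p H.
have := H g0 (mm g0 ^+ 2) g0p g0l (sqr_ge0 _).
rewrite !ell_dec // ?sqr_ge0 // sqrt_sq ?mm_ge0 // subrr expr0n /= mulr0 addr0.
rewrite gerDl pmulr_rle0 ?n12 // => h.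
have : (Num.sqrt h0 - mm g0) ^+ 2 == 0 by rewrite eq_le h sqr_ge0.
by rewrite sqrf_eq0 subr_eq0 => /eqP.
Qed.

Lemma hf_min g0 h0 : 0 < g0 -> g0 <= l -> 0 <= h0 ->
  (forall g h, 0 < g -> g <= l -> 0 <= h -> ell l nu1 nu2 g0 h0 <= ell l nu1 nu2 g h) ->
  forall g, 0 < g -> g <= l -> hf g0 <= hf g.
Proof.
move=> g0p g0l h0p H g gp gl.
have e0 := s0_eq g0p g0l h0p H.
have := H g (mm g ^+ 2) gp gl (sqr_ge0 _).
rewrite !ell_dec // ?sqr_ge0 // sqrt_sq ?mm_ge0 // e0 !subrr expr0n /= !mulr0 !addr0.
by [].
Qed.

Lemma tangent x y : 0 < x -> x < l -> 0 < y -> y <= l -> hf x + FF x * (y - x) <= hf y.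
Proof.
move=> x0 xl y0 yl.
have rx0 := rr_gt0 xl.
have ey : y - x = rr x ^+ 2 - rr y ^+ 2 by rewrite !rr2 // ?ltW //; ring.
have hA : 2^-1 * ln (l / x) - (2 * x)^-1 * (y - x) <= 2^-1 * ln (l / y).
  rewrite !ln_ratio //.
  have := @ln_le_sub1 R _ (divr_gt0 y0 x0); rewrite ln_div ?posrE //.
  have -> : y / x - 1 = 2 * ((2 * x)^-1 * (y - x)) by field; rewrite gt_eqF.
  lra.
have hB : (q - rr x) ^+ 2 + (q - rr x) / rr x * (y - x) <= (q - rr y) ^+ 2.
  rewrite -subr_ge0 ey.
  have -> : (q - rr y) ^+ 2 - ((q - rr x) ^+ 2 + (q - rr x) / rr x * (rr x ^+ 2 - rr y ^+ 2))
     = q * (rr x - rr y) ^+ 2 / rr x by field; rewrite gt_eqF.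
  apply: divr_ge0; [apply: mulr_ge0; [exact: ltW q_gt0 | exact: sqr_ge0] | exact: ltW].
have eF : FF x * (y - x) = - ((2 * x)^-1 * (y - x)) + nu1 * (y - x) +
    cc * ((q - rr x) / rr x * (y - x)).
  by rewrite /FF; field; rewrite !gt_eqF.
have := ler_wpM2l (ltW cc_gt0) hB.
rewrite /hf eF; lra.
Qed.


Lemma g0_lt_l g0 h0 : 0 < g0 -> g0 <= l -> 0 <= h0 ->
  (forall g h, 0 < g -> g <= l -> 0 <= h -> ell l nu1 nu2 g0 h0 <= ell l nu1 nu2 g h) ->
  g0 < l.
Proof.
move=> g0p g0l h0p H.
have Hm := hf_min g0p g0l h0p H.
rewrite lt_neqAle g0l andbT; apply/eqP => eg.
have cq0 : 0 < cc * q by rewrite mulr_gt0 ?cc_gt0 ?q_gt0.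
have lc0 : 0 < l^-1 + cc by rewrite addr_gt0 ?invr_gt0 ?cc_gt0.
pose rho := cc * q / (l^-1 + cc).
have rho0 : 0 < rho by rewrite /rho divr_gt0.
pose d := Num.min (l / 2) (rho ^+ 2 / 2).
have r20 : 0 < rho ^+ 2 by apply: exprn_gt0.
have d0 : 0 < d by rewrite /d lt_min; apply/andP; split; apply: divr_gt0.
have dl2 : d <= l / 2 by rewrite /d ge_min lexx.
have drho : d < rho ^+ 2.
  have : d <= rho ^+ 2 / 2 by rewrite /d ge_min lexx orbT.
  lra.
pose x := l - d.
have x0 : 0 < x by rewrite /x; lra.
have xl : x < l by rewrite /x; lra.
have rx : rr x = Num.sqrt d by rewrite /rr /x; congr Num.sqrt; ring.
have rxr : rr x < rho by rewrite rx -(sqrt_sq (ltW rho0)) ltr_sqrt.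
have rxp : 0 < rr x := rr_gt0 xl.
have Fx : 0 < FF x.
  have i1 : (2 * x)^-1 <= l^-1.
    by rewrite lef_pV2 ?posrE ?mulr_gt0 //; rewrite /x; lra.
  have i2 : l^-1 + cc < cc * q / rr x.
    have e : l^-1 + cc = cc * q / rho.
      have l1c : 0 < 1 + cc * l by rewrite addr_gt0 // mulr_gt0 // cc_gt0.
      by rewrite /rho; field; rewrite !gt_eqF ?q_gt0 ?cc_gt0 ?l1c.
    by rewrite e ltr_pM2l // ltf_pV2 ?posrE.
  rewrite /FF; have := n10; lra.
have := tangent x0 xl l0 (lexx l).
have := Hm x x0 (ltW xl); rewrite eg.
have : 0 < FF x * (l - x) by rewrite mulr_gt0 // subr_gt0.
lra.
Qed.


Lemma FF0 g0 h0 : 0 < g0 -> g0 <= l -> 0 <= h0 ->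
  (forall g h, 0 < g -> g <= l -> 0 <= h -> ell l nu1 nu2 g0 h0 <= ell l nu1 nu2 g h) ->
  FF g0 = 0.
Proof.
move=> g0p g0l h0p H.
have g0l' := g0_lt_l g0p g0l h0p H.
have Hm := hf_min g0p g0l h0p H.
have r0p : 0 < rr g0 := rr_gt0 g0l'.
have r02 : rr g0 ^+ 2 = l - g0 by rewrite rr2.
have cq0 : 0 < cc * q by rewrite mulr_gt0 ?cc_gt0 ?q_gt0.
pose K := (g0 ^+ 2)^-1 + 8 * (cc * q) / rr g0 ^+ 3.
have K0 : 0 < K.
  rewrite /K addr_gt0 ?invr_gt0 ?exprn_gt0 //.
  by rewrite divr_gt0 ?exprn_gt0 // mulr_gt0.
have eK : forall d, d / g0 ^+ 2 + cc * q * (8 * d / rr g0 ^+ 3) = d * K.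
  by move=> d; rewrite /K; field; rewrite !gt_eqF.
case: (ltgtP (FF g0) 0) => hF //.
- pose d := Num.min (g0 / 2) (Num.min (rr g0 ^+ 2 / 2) (- FF g0 / (2 * K))).
  have d0 : 0 < d.
    rewrite /d !lt_min; apply/and3P; split; apply: divr_gt0; rewrite ?exprn_gt0 ?mulr_gt0 //.
    by rewrite oppr_gt0.
  have d1 : d <= g0 / 2 by rewrite /d ge_min lexx.
  have d2 : d <= rr g0 ^+ 2 / 2 by rewrite /d !ge_min lexx orbT.
  have d3 : d * K <= - FF g0 / 2.
    have : d <= - FF g0 / (2 * K) by rewrite /d !ge_min lexx !orbT.
    rewrite ler_pdivlMr ?mulr_gt0 // => h; lra.
  pose x := g0 + d.
  have x0 : 0 < x by rewrite /x; lra.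
  have xl : x < l by rewrite /x; lra.
  have rx2 : rr x ^+ 2 = rr g0 ^+ 2 - d by rewrite !rr2 ?ltW // /x; ring.
  have rxh : rr g0 / 2 <= rr x.
    rewrite /rr -(sqrt_sq (x := rr g0 / 2)); last by rewrite divr_ge0 // ltW.
    apply: ler_wsqrtr; rewrite -(rr2 (ltW xl)) rx2; lra.
  have rxp : 0 < rr x by apply: rr_gt0.
  have rxr : rr x <= rr g0 by apply: ler_wsqrtr; rewrite /x; lra.
  have b1 : (2 * g0)^-1 - (2 * x)^-1 <= d / g0 ^+ 2.
    have -> : (2 * g0)^-1 - (2 * x)^-1 = d / (2 * g0 * x) by rewrite /x; field; rewrite !gt_eqF.
    apply: div_mono; [exact: ltW d0 | exact: exprn_gt0 |].
    rewrite -subr_ge0 (_ : 2 * g0 * x - g0 ^+ 2 = g0 * (2 * x - g0)); last by ring.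
    apply: mulr_ge0; [exact: ltW | rewrite /x; lra].
  have b2 : (rr x)^-1 - (rr g0)^-1 <= 8 * d / rr g0 ^+ 3.
    apply: le_trans (inv_diff rxp rxr) _.
    rewrite rx2 (_ : rr g0 ^+ 2 - (rr g0 ^+ 2 - d) = d); last by ring.
    have : (rr g0 / 2) ^+ 3 <= rr x ^+ 3 by rewrite lerXn2r // ?nnegrE ?divr_ge0 ?ltW.
    move=> h3.
    have -> : 8 * d / rr g0 ^+ 3 = d / (rr g0 / 2) ^+ 3 by field; rewrite gt_eqF.
    apply: div_mono => //; [exact: ltW d0 | apply: exprn_gt0; exact: divr_gt0].
  have eFF : FF x - FF g0 = ((2 * g0)^-1 - (2 * x)^-1) + cc * q * ((rr x)^-1 - (rr g0)^-1).
    by rewrite /FF; ring.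
  have b2' := ler_wpM2l (ltW cq0) b2.
  have hFx : FF x < 0 by move: (eK d) eFF b1 b2' d3 hF; lra.
  have := tangent x0 xl g0p g0l.
  have := Hm x x0 (ltW xl).
  have : 0 < FF x * (g0 - x) by rewrite nmulr_rgt0 // /x; lra.
  lra.
- pose d := Num.min (g0 / 2) (FF g0 / (2 * K)).
  have d0 : 0 < d.
    by rewrite /d !lt_min; apply/andP; split; apply: divr_gt0; rewrite ?mulr_gt0.
  have d1 : d <= g0 / 2 by rewrite /d ge_min lexx.
  have d3 : d * K <= FF g0 / 2.
    have : d <= FF g0 / (2 * K) by rewrite /d !ge_min lexx !orbT.
    rewrite ler_pdivlMr ?mulr_gt0 // => h; lra.
  pose x := g0 - d.
  have x0 : 0 < x by rewrite /x; lra.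
  have xl : x < l by rewrite /x; lra.
  have rx2 : rr x ^+ 2 = rr g0 ^+ 2 + d by rewrite !rr2 ?ltW // /x; ring.
  have rxr : rr g0 <= rr x by apply: ler_wsqrtr; rewrite /x; lra.
  have b1 : (2 * x)^-1 - (2 * g0)^-1 <= d / g0 ^+ 2.
    have -> : (2 * x)^-1 - (2 * g0)^-1 = d / (2 * g0 * x) by rewrite /x; field; rewrite !gt_eqF.
    apply: div_mono; [exact: ltW d0 | exact: exprn_gt0 |].
    rewrite -subr_ge0 (_ : 2 * g0 * x - g0 ^+ 2 = g0 * (2 * x - g0)); last by ring.
    apply: mulr_ge0; [exact: ltW | rewrite /x; lra].
  have b2 : (rr g0)^-1 - (rr x)^-1 <= 8 * d / rr g0 ^+ 3.
    apply: le_trans (inv_diff r0p rxr) _.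
    rewrite rx2 (_ : rr g0 ^+ 2 + d - rr g0 ^+ 2 = d); last by ring.
    rewrite ler_pM2r ?invr_gt0 ?exprn_gt0 //; lra.
  have eFF : FF g0 - FF x = ((2 * x)^-1 - (2 * g0)^-1) + cc * q * ((rr g0)^-1 - (rr x)^-1).
    by rewrite /FF; ring.
  have b2' := ler_wpM2l (ltW cq0) b2.
  have hFx : 0 < FF x by move: (eK d) eFF b1 b2' d3 hF; lra.
  have := tangent x0 xl g0p g0l.
  have := Hm x x0 (ltW xl).
  have : 0 < FF x * (g0 - x) by rewrite mulr_gt0 // /x; lra.
  lra.
Qed.


Lemma comp_main g0 h0 : 0 < g0 -> g0 <= l -> 0 <= h0 ->
  (forall g h, 0 < g -> g <= l -> 0 <= h -> ell l nu1 nu2 g0 h0 <= ell l nu1 nu2 g h) ->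
  [/\ g0 < l, theta_eq nu1 nu2 l (2 * nu1 * g0),
     g0 = 2 * nu1 * g0 / (2 * nu1) &
     h0 = l / (1 + (1 - 2 * nu1 * g0) * nu1 / nu2) ^+ 2].
Proof.
move=> g0p g0l h0p H.
have g0l' := g0_lt_l g0p g0l h0p H.
have F0 := FF0 g0p g0l h0p H.
have e0 := s0_eq g0p g0l h0p H.
have r0p : 0 < rr g0 := rr_gt0 g0l'.
have r02 : rr g0 ^+ 2 = l - g0 by rewrite rr2.
have qp := q_gt0.
have W0 : 0 < nu1 * rr g0 + nu2 * q by rewrite addr_gt0 // mulr_gt0.
have key : 2 * nu1 * g0 * (nu1 * rr g0 + nu2 * q) = (nu1 + nu2) * rr g0.
  have : 2 * g0 * (nu1 + nu2) * rr g0 * FF g0 = 0 by rewrite F0 mulr0.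
  rewrite /FF /cc => h; apply/eqP; rewrite -subr_eq0 -h; apply/eqP.
  by field; rewrite !gt_eqF ?n12.
have eth : 2 * nu1 * g0 = (nu1 + nu2) * rr g0 / (nu1 * rr g0 + nu2 * q).
  by rewrite -key mulfK // gt_eqF.
have eden : 1 + (1 - 2 * nu1 * g0) * nu1 / nu2 = q * (nu1 + nu2) / (nu1 * rr g0 + nu2 * q).
  by rewrite eth; field; rewrite !gt_eqF.
have den0 : 0 < q * (nu1 + nu2) / (nu1 * rr g0 + nu2 * q) by rewrite divr_gt0 // mulr_gt0 // n12.
split => //.
- split; first by rewrite eden gt_eqF.
  have -> : 2 * nu1 * g0 / (2 * nu1 * l) = g0 / l by field; rewrite !gt_eqF.
  split.
  + by rewrite subr_ge0 ler_pdivrMr // mul1r.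
  + have -> : 1 - g0 / l = (rr g0 / q) ^+ 2.
      by rewrite expr_div_n r02 q2; field; rewrite gt_eqF.
    rewrite sqrt_sq; last by rewrite divr_ge0 // ltW.
    by rewrite eden eth; field; rewrite !gt_eqF ?n12.
- by field; rewrite !gt_eqF.
- rewrite eden -[h0]sqr_sqrtr // e0 /mm.
  rewrite -[in RHS]q2; field; rewrite !gt_eqF ?n12 //.
Qed.

End Comp.

Lemma theta_pos (R : realType) (nu1 nu2 l t : R) : 0 < nu1 -> 0 < nu2 -> 0 < l ->
  theta_eq nu1 nu2 l t -> 0 < t /\ 0 < 1 + (1 - t) * nu1 / nu2.
Proof.
move=> n1 n2 l0 [dn [rad e]].
have s0 : 0 <= t / (1 + (1 - t) * nu1 / nu2) by rewrite e sqrtr_ge0.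
have K0 : 0 < 2 * nu1 * l by rewrite !mulr_gt0.
have tp : 0 < t.
  case: (lerP t 0) => // t0; exfalso.
  have dp : 0 < 1 + (1 - t) * nu1 / nu2.
    have t1 : 0 <= 1 - t by lra.
    have : 0 <= (1 - t) * nu1 / nu2.
      by apply: divr_ge0; [apply: mulr_ge0 => //; exact: ltW | exact: ltW].
    lra.
  have : t / (1 + (1 - t) * nu1 / nu2) <= 0 by rewrite pmulr_lle0 ?invr_gt0.
  move=> h; have h0 : Num.sqrt (1 - t / (2 * nu1 * l)) = 0.
    by rewrite -e; apply/eqP; rewrite eq_le h s0.
  move/eqP: h0; rewrite sqrtr_eq0.
  have : t / (2 * nu1 * l) <= 0 by rewrite pmulr_lle0 ?invr_gt0.
  move=> h1 h2; lra.
split => //.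
case: (ltgtP (1 + (1 - t) * nu1 / nu2) 0) => // [dn0|dz]; last by move: dn; rewrite dz eqxx.
have : t / (1 + (1 - t) * nu1 / nu2) < 0 by rewrite pmulr_rlt0 // invr_lt0.
move=> h; lra.
Qed.

Lemma theta_lt (R : realType) (nu1 nu2 l t1 t2 : R) : 0 < nu1 -> 0 < nu2 -> 0 < l ->
  t1 < t2 -> theta_eq nu1 nu2 l t1 -> theta_eq nu1 nu2 l t2 -> False.
Proof.
move=> n1 n2 l0 t12 h1 h2.
have [p1 d1] := theta_pos n1 n2 l0 h1.
have [p2 d2] := theta_pos n1 n2 l0 h2.
case: h1 => _ [r1 e1]; case: h2 => _ [r2 e2].
have K0 : 0 < 2 * nu1 * l by rewrite !mulr_gt0.
have hl : t1 / (1 + (1 - t1) * nu1 / nu2) < t2 / (1 + (1 - t2) * nu1 / nu2).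
  rewrite ltr_pdivrMr // mulrAC ltr_pdivlMr //.
  rewrite -subr_gt0.
  have -> : t2 * (1 + (1 - t1) * nu1 / nu2) - t1 * (1 + (1 - t2) * nu1 / nu2) =
    (t2 - t1) * (1 + nu1 / nu2) by ring.
  by rewrite mulr_gt0 ?subr_gt0 // addr_gt0 // divr_gt0.
have hr : Num.sqrt (1 - t2 / (2 * nu1 * l)) <= Num.sqrt (1 - t1 / (2 * nu1 * l)).
  by apply: ler_wsqrtr; rewrite lerB // ler_pM2r ?invr_gt0 // ltW.
move: hl; rewrite e1 e2 => hl; lra.
Qed.

Lemma theta_uniq (R : realType) (nu1 nu2 l t1 t2 : R) : 0 < nu1 -> 0 < nu2 -> 0 < l ->
  theta_eq nu1 nu2 l t1 -> theta_eq nu1 nu2 l t2 -> t2 = t1.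
Proof.
move=> n1 n2 l0 h1 h2.
case: (ltgtP t1 t2) => // t12; exfalso.
- exact: (theta_lt n1 n2 l0 t12 h1 h2).
- exact: (theta_lt n1 n2 l0 t12 h2 h1).
Qed.



Set Implicit Arguments.
Unset Strict Implicit.
Section Cases.
Variables (R : realType) (L : nat) (lam : 'I_L -> R).
Hypothesis Hlam : forall i, 0 < lam i.

Lemma case1 D P g lh : strictly_feasible lam D P -> optimal lam (feasible lam D P) g lh ->
  active_D lam D P -> active_P lam D P ->
   exists nu1 nu2 : R, 0 < nu1 /\ 0 < nu2 /\
   exists theta : 'I_L -> R,
     (forall i, theta_unique_sol nu1 nu2 (lam i) (theta i)) /\
     (forall i, g i = theta i / (2 * nu1) /\
                lh i = lam i / (1 + (1 - theta i) * nu1 / nu2) ^+ 2) /\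
     \sum_(i < L) Dl (lam i) (g i) (lh i) = D /\
     \sum_(i < L) Pl (lam i) (lh i) = P /\
     (forall i, g i < lam i).
Proof.
move=> sf op aD aP.
have [nu1 [nu2 [n1 n2 DE PE Hl]]] := lagr Hlam sf op aD aP.
have bx : box_cons lam g lh by case: op => [[]].
have Hc := comp_ineq bx Hl.
have CM : forall i, _ := fun i =>
  let: conj gp (conj gl hp) := bx i in comp_main (Hlam i) n1 n2 gp gl hp (Hc i).
exists nu1, nu2; split => //; split => //.
exists (fun i => 2 * nu1 * g i); split; [|split; [|split; [|split]]].
- move=> i; have [_ te _ _] := CM i; split => // t' h'.
  exact: (theta_uniq n1 n2 (Hlam i) te h').
- by move=> i; have [_ _ e1 e2] := CM i.
- exact: DE.
- exact: PE.
- by move=> i; have [e _ _ _] := CM i.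
Qed.

Lemma DlE (l h : R) : Dl l l h = l + h.
Proof. by rewrite /Dl subrr mulr0 sqrtr0 mulr0 subr0. Qed.

Lemma case3 D P : inactive_D lam D P ->
   (forall g lh, optimal lam (feasible lam D P) g lh ->
      (forall i, g i = lam i) /\
      \sum_(i < L) Pl (lam i) (lh i) <= P /\
      \sum_(i < L) (lam i + lh i) <= D /\ (forall i, 0 <= lh i)) /\
   (forall lh : 'I_L -> R,
      \sum_(i < L) Pl (lam i) (lh i) <= P ->
      \sum_(i < L) (lam i + lh i) <= D -> (forall i, 0 <= lh i) ->
      optimal lam (feasible lam D P) lam lh).
Proof.
move=> [g0 [lh0 [[[b0 p0] o0] f0]]].
have r0 : rate_obj lam g0 = 0.
  apply/eqP; rewrite eq_le (rate_ge0 b0) andbT -(rate_lam Hlam).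
  apply: (o0 lam lh0); split => // i; have [_ [_ h]] := b0 i; split => //; split => //.
split.
- move=> g lh [[bx [dx px]] o].
  have rg : rate_obj lam g = 0.
    by apply/eqP; rewrite eq_le (rate_ge0 bx) andbT -r0; apply: (o g0 lh0 f0).
  have ge := rate_eq0 Hlam bx rg.
  split => //; split => //; split; last by move=> i; case: (bx i) => _ [].
  move: dx; rewrite /dist_cons (eq_bigr (fun i => lam i + lh i)) // => i _.
  by rewrite ge DlE.
- move=> lh p d h0; split.
  + split; first by move=> i; split => //; split.
    split => //; rewrite /dist_cons (eq_bigr (fun i => lam i + lh i)) // => i _.
    by rewrite DlE.
  + move=> g' lh' [b' _]; rewrite rate_lam //; exact: rate_ge0 b'.
Qed.

End Cases.


Section Cont.
Variables (R : realType) (T : topologicalType).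

Lemma cont_sum (I : Type) (r : seq I) (F : I -> T -> R) :
  (forall i, continuous (F i)) -> continuous (fun x => \sum_(i <- r) F i x).
Proof.
move=> Fc; elim: r => [|a r IH].
  have -> : (fun x => \sum_(i <- [::]) F i x) = (fun _ => 0 : R).
    by apply/funext => y; rewrite big_nil.
  by move=> x; apply: cst_continuous.
have -> : (fun x => \sum_(i <- a :: r) F i x) = F a + (fun x => \sum_(i <- r) F i x).
  by apply/funext => y; rewrite big_cons.
by move=> x; apply: continuousD; [apply: Fc | apply: IH].
Qed.

Lemma cont_prod (I : Type) (r : seq I) (F : I -> T -> R) :
  (forall i, continuous (F i)) -> continuous (fun x => \prod_(i <- r) F i x).
Proof.
move=> Fc; elim: r => [|a r IH].
  have -> : (fun x => \prod_(i <- [::]) F i x) = (fun _ => 1 : R).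
    by apply/funext => y; rewrite big_nil.
  by move=> x; apply: cst_continuous.
have -> : (fun x => \prod_(i <- a :: r) F i x) = F a \* (fun x => \prod_(i <- r) F i x).
  by apply/funext => y; rewrite big_cons.
by move=> x; apply: continuousM; [apply: Fc | apply: IH].
Qed.

Lemma cont_min (f g : T -> R) : continuous f -> continuous g ->
  continuous (fun x => Num.min (f x) (g x)).
Proof.
move=> fc gc x; exact: (@continuous_min R T f g x (fc x) (gc x)).
Qed.

Lemma cont_sqrt (f : T -> R) : continuous f -> continuous (fun x => Num.sqrt (f x)).
Proof.
move=> fc x; apply: continuous_comp; [exact: fc | exact: sqrt_continuous].
Qed.

End Cont.

Set Implicit Arguments.
Unset Strict Implicit.
Section Case2.
Variables (R : realType) (L : nat) (lam : 'I_L -> R).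
Hypothesis Hlam : forall i, 0 < lam i.

Lemma Dl_ge (l g h : R) : 0 <= h -> g <= l -> g <= Dl l g h.
Proof. by move=> h0 gl; rewrite (@Dl_dec R _ _ _ h0 gl) lerDl sqr_ge0. Qed.

Lemma rate_sum g : (forall i, 0 < g i) ->
  rate_obj lam g = 2^-1 * (\sum_(i < L) ln (lam i) - \sum_(i < L) ln (g i)).
Proof.
move=> gp; rewrite /rate_obj -sumrB; congr (_ * _); apply: eq_bigr => i _.
by rewrite ln_ratio.
Qed.

Lemma wf_ineq (th : R) (g : 'I_L -> R) : 0 < th -> (forall i, 0 < g i) ->
  (forall i, g i <= lam i) ->
  \sum_(i < L) ln (Num.min th (lam i)) <= \sum_(i < L) ln (g i) ->
  \sum_(i < L) g i <= \sum_(i < L) Num.min th (lam i) ->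
  forall i, g i = Num.min th (lam i).
Proof.
move=> th0 gp gl hln hs.
pose gw i := Num.min th (lam i).
have gwp : forall i, 0 < gw i by move=> i; rewrite /gw lt_min th0 Hlam.
pose a i := g i / gw i - 1 - ln (g i / gw i).
have a0 : forall i, 0 <= a i.
  move=> i; rewrite /a subr_ge0; apply: ln_le_sub1; exact: divr_gt0.
have t1 : forall i, g i / gw i - 1 <= (g i - gw i) / th.
  move=> i; rewrite /gw; case: (lerP th (lam i)) => h.
  - by rewrite le_eqVlt; apply/orP; left; apply/eqP; field; rewrite gt_eqF.
  - 
    have -> : g i / lam i - 1 = - ((lam i - g i) / lam i) by field; rewrite gt_eqF.
    have -> : (g i - lam i) / th = - ((lam i - g i) / th) by field; rewrite gt_eqF.
    rewrite lerN2; apply: div_mono => //; last exact: ltW.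
    by rewrite subr_ge0.
have s1 : \sum_(i < L) (g i / gw i - 1) <= 0.
  apply: le_trans (ler_sum _ (fun i _ => t1 i)) _.
  rewrite -mulr_suml sumrB pmulr_lle0 ?invr_gt0 // subr_le0; exact: hs.
have s2 : 0 <= \sum_(i < L) ln (g i / gw i).
  rewrite (eq_bigr (fun i => ln (g i) - ln (gw i))); last by move=> i _; rewrite ln_div ?posrE.
  by rewrite sumrB subr_ge0.
have sa : \sum_(i < L) a i = 0.
  apply/eqP; rewrite eq_le sumr_ge0 ?andbT; last by move=> i _.
  by rewrite /a sumrB; lra.
move=> i; have := @psumr_eq0P _ _ _ _ (fun i _ => a0 i) sa i isT.
rewrite /a => e.
have u0 : 0 < g i / gw i by apply: divr_gt0.
have : g i / gw i == 1.
  apply/negPn/negP => hn; have := @ln_lt_sub1 R _ u0 hn; lra.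
move/eqP => e1; rewrite -[g i](divfK (x := gw i)) ?e1 ?mul1r //.
by rewrite gt_eqF.
Qed.


Lemma le_sum_one (F : 'I_L -> R) i : (forall j, 0 <= F j) -> F i <= \sum_(j < L) F j.
Proof.
move=> F0; rewrite (bigD1 i) //= lerDl; apply: sumr_ge0 => j _; exact: F0.
Qed.

Lemma case2 D P : strictly_feasible lam D P -> active_D lam D P -> inactive_P lam D P ->
   forall g lh, optimal lam (feasible lam D P) g lh ->
   exists nu1 : R, 0 < nu1 /\
     \sum_(i < L) pospart (lam i - 1 / (2 * nu1)) =
       pospart (\sum_(i < L) lam i - D) /\
     (forall i, g i = Num.min (1 / (2 * nu1)) (lam i) /\
                lh i = lam i - Num.min (1 / (2 * nu1)) (lam i)).
Proof.
move=> [y1 [y2 [by1 [dy py]]]] aD [g0 [lh0 [[[b0 d0] o0] f0]]] g lh [[bx [dx px]] o].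
have Dp : 0 < D.
  have : 0 <= \sum_(i < L) Dl (lam i) (y1 i) (y2 i).
    apply: sumr_ge0 => i _; have [p [q r]] := by1 i.
    by apply: le_trans (Dl_ge r q); exact: ltW.
  move: dy; rewrite /Dsum; lra.
pose S := \sum_(i < L) lam i.
have DS : D < S.
  rewrite ltNge; apply/negP => SD; apply: aD.
  have fl : feasible_noP lam D lam (fun _ => 0).
    split; first by move=> i; split => //; split.
    rewrite /dist_cons (eq_bigr (fun i => lam i)) // => i _.
    by rewrite DlE addr0.
  have r0 : rate_obj lam g0 = 0.
    by apply/eqP; rewrite eq_le (rate_ge0 b0) andbT -(rate_lam Hlam); exact: (o0 lam (fun _ => 0) fl).
  exists g0, lh0; split; last exact: f0.
  split; first by split => //; case: f0 => _ [].
  by move=> g' lh' [b' _]; rewrite r0; apply: rate_ge0 b'.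
pose f := fun t : R => \sum_(i < L) Num.min t (lam i).
have fc : continuous f.
  apply: cont_sum => i; apply: cont_min; first by move=> x; exact: cvg_id.
  by move=> x; apply: cst_continuous.
have S0 : 0 <= S by apply: sumr_ge0 => i _; exact: ltW.
have f0' : f 0 = 0 by rewrite /f big1 // => i _; rewrite min_l // ltW.
have fS : f S = S.
  rewrite /f; apply: eq_bigr => i _; rewrite min_r //.
  by apply: le_sum_one => j; exact: ltW.
have [th thi fth] : exists2 th, th \in `[0, S] & f th = D.
  apply: IVT => //; first exact: continuous_subspaceT.
  rewrite f0' fS min_l // max_r //; apply/andP; split; exact: ltW.
have th0 : 0 < th.
  move: thi; rewrite in_itv /= => /andP[th0 _]; rewrite lt_neqAle th0 andbT.
  by apply/eqP => e; move: fth; rewrite -e f0' => e'; move: Dp; rewrite -e' ltxx.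
pose gw := fun i => Num.min th (lam i).
have gwp : forall i, 0 < gw i by move=> i; rewrite /gw lt_min th0 Hlam.
have gwl : forall i, gw i <= lam i by move=> i; rewrite /gw ge_min lexx orbT.
have fw : feasible_noP lam D gw (fun i => lam i - gw i).
  split; first by move=> i; split => //; split => //; rewrite subr_ge0.
  rewrite /dist_cons (eq_bigr (fun i => gw i)); first by rewrite -fth.
  move=> i _; rewrite (@Dl_dec R _ _ _ _ (gwl i)) ?subrr ?expr0n /= ?addr0 //.
  by rewrite subr_ge0.
have gp : forall i, 0 < g i by move=> i; case: (bx i).
have gl : forall i, g i <= lam i by move=> i; case: (bx i) => _ [].
have hp : forall i, 0 <= lh i by move=> i; case: (bx i) => _ [].
have rg : rate_obj lam g <= rate_obj lam gw.
  by apply: le_trans (o _ _ f0) (o0 _ _ fw).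
have hln : \sum_(i < L) ln (gw i) <= \sum_(i < L) ln (g i).
  move: rg; rewrite !rate_sum // ler_pM2l ?invr_gt0 //; lra.
have sg : \sum_(i < L) g i <= D.
  apply: le_trans _ dx; apply: ler_sum => i _; apply: Dl_ge => //.
have sg2 : \sum_(i < L) g i <= \sum_(i < L) Num.min th (lam i) by move: sg; rewrite -fth.
have ge := wf_ineq th0 gp gl hln sg2.
have sq : forall i, Dl (lam i) (g i) (lh i) = g i + (Num.sqrt (lh i) - Num.sqrt (lam i - g i)) ^+ 2.
  by move=> i; rewrite (@Dl_dec R _ _ _ (hp i) (gl i)).
have sq0 : \sum_(i < L) (Num.sqrt (lh i) - Num.sqrt (lam i - g i)) ^+ 2 = 0.
  apply/eqP; rewrite eq_le sumr_ge0 ?andbT; last by move=> i _; exact: sqr_ge0.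
  have : \sum_(i < L) g i = D by rewrite -fth /f; apply: eq_bigr => i _; rewrite ge.
  move: dx; rewrite /dist_cons (eq_bigr _ (fun i _ => sq i)) big_split /=; lra.
exists (2 * th)^-1; split; first by rewrite invr_gt0 mulr_gt0.
have eth : 1 / (2 * (2 * th)^-1) = th by field; rewrite gt_eqF.
rewrite eth; split.
  have -> : \sum_(i < L) pospart (lam i - th) = \sum_(i < L) (lam i - gw i).
    apply: eq_bigr => i _; rewrite /pospart /gw.
    case: (lerP th (lam i)) => h.
    - by rewrite max_r // subr_ge0.
    - by rewrite max_l ?subrr // subr_le0 ltW.
  have sgw : \sum_(i < L) gw i = D by rewrite -fth.
  rewrite sumrB sgw /pospart max_r //; rewrite subr_ge0; exact: ltW.
move=> i; split; first exact: ge.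
have := @psumr_eq0P _ _ _ _ (fun i _ => sqr_ge0 (Num.sqrt (lh i) - Num.sqrt (lam i - g i))) sq0 i isT.
move/eqP; rewrite sqrf_eq0 subr_eq0 => /eqP e.
rewrite -ge -(sqr_sqrtr (hp i)) e sqr_sqrtr //; rewrite subr_ge0; exact: gl.
Qed.

End Case2.


Set Implicit Arguments.
Unset Strict Implicit.

Section Cont2.
Variables (R : realType) (T : topologicalType).
Implicit Types f g : T -> R.
Lemma contD f g : continuous f -> continuous g -> continuous (fun x => f x + g x).
Proof. by move=> fc gc x; exact: (continuousD (fc x) (gc x)). Qed.
Lemma contB f g : continuous f -> continuous g -> continuous (fun x => f x - g x).
Proof. by move=> fc gc x; exact: (continuousB (fc x) (gc x)). Qed.
Lemma contM f g : continuous f -> continuous g -> continuous (fun x => f x * g x).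
Proof. by move=> fc gc x; exact: (continuousM (fc x) (gc x)). Qed.
Lemma contN f : continuous f -> continuous (fun x => - f x).
Proof. by move=> fc x; exact: (continuousN (fc x)). Qed.
Lemma contC (a : R) : continuous (fun _ : T => a).
Proof. by move=> x; exact: cst_continuous. Qed.
End Cont2.

Lemma ln_prod (R : realType) (I : finType) (F : I -> R) : (forall i, 0 < F i) ->
  ln (\prod_(i : I) F i) = \sum_(i : I) ln (F i).
Proof.
move=> Fp.
have : 0 < \prod_(i : I) F i /\ ln (\prod_(i : I) F i) = \sum_(i : I) ln (F i).
  apply: (big_ind2 (fun a b => 0 < a /\ ln a = b)).
  - by rewrite ln1.
  - move=> a1 b1 a2 b2 [p1 e1] [p2 e2]; split; first exact: mulr_gt0.
    by rewrite lnM ?posrE // e1 e2.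
  - by move=> i _; split.
by case.
Qed.

Lemma lh_bound (R : realType) (l h P : R) : 0 <= l -> 0 <= h -> Pl l h <= P ->
  h <= (Num.sqrt l + Num.sqrt P) ^+ 2.
Proof.
move=> l0 h0 hP.
have : Num.sqrt ((Num.sqrt l - Num.sqrt h) ^+ 2) <= Num.sqrt P by apply: ler_wsqrtr.
rewrite sqrtr_sqr => /ler_normlP [h1 _].
rewrite -[h]sqr_sqrtr // lerXn2r // ?nnegrE ?sqrtr_ge0 //.
have := sqrtr_ge0 P; lra.
Qed.

Section Exist.
Variables (R : realType) (L : nat) (lam : 'I_L -> R).
Hypothesis Hlam : forall i, 0 < lam i.

Definition Gv (v : 'rV[R]_(L + L)) : 'I_L -> R := fun i => v ord0 (lshift L i).
Definition Hv (v : 'rV[R]_(L + L)) : 'I_L -> R := fun i => v ord0 (rshift L i).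
Definition emb (g lh : 'I_L -> R) : 'rV[R]_(L + L) :=
  \row_(j < L + L) (match fintype.split j with inl i => g i | inr i => lh i end).

Lemma Gv_emb g lh : Gv (emb g lh) = g.
Proof.
apply/funext => i; rewrite /Gv /emb mxE.
have e : fintype.split (lshift L i) = inl i := unsplitK (inl i).
by rewrite e.
Qed.

Lemma Hv_emb g lh : Hv (emb g lh) = lh.
Proof.
apply/funext => i; rewrite /Hv /emb mxE.
have e : fintype.split (rshift L i) = inr i := unsplitK (inr i).
by rewrite e.
Qed.

Lemma cont_coord (j : 'I_(L + L)) : continuous (fun v : 'rV[R]_(L + L) => v ord0 j).
Proof. exact: coord_continuous. Qed.

Lemma cont_Dsum : continuous (fun v : 'rV[R]_(L + L) => Dsum lam (Gv v) (Hv v)).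
Proof.
rewrite /Dsum; apply: cont_sum => i; rewrite /Dl /Gv /Hv.
apply: contD; last exact: cont_coord.
apply: contB; first exact: contC.
apply: contM; first exact: contC.
apply: cont_sqrt; apply: contM; first exact: cont_coord.
by apply: contB; [exact: contC | exact: cont_coord].
Qed.

Lemma cont_Psum : continuous (fun v : 'rV[R]_(L + L) => Psum lam (Hv v)).
Proof.
rewrite /Psum; apply: cont_sum => i; rewrite /Pl /Hv.
apply: contM; apply: contB; (try exact: contC); apply: cont_sqrt; exact: cont_coord.
Qed.

Lemma cont_obj : continuous (fun v : 'rV[R]_(L + L) => - \prod_(i < L) Gv v i).
Proof. by apply: contN; apply: cont_prod => i; exact: cont_coord. Qed.


Lemma exist_opt D P : strictly_feasible lam D P ->
  exists g lh, optimal lam (feasible lam D P) g lh.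
Proof.
move=> [g0 [lh0 [b0 [d0 p0]]]].
have P0 : 0 <= P.
  apply: le_trans (ltW p0); apply: sumr_ge0 => i _; exact: sqr_ge0.
pose B i := (Num.sqrt (lam i) + Num.sqrt P) ^+ 2.
pose A := fun j : 'I_(L + L) => match fintype.split j with
  | inl i => `[0, lam i]%classic | inr i => `[0, B i]%classic end.
pose Kb := [set v : 'rV[R]_(L + L) | forall j, A j (v ord0 j)]%classic.
pose K := (Kb `&` [set v | Dsum lam (Gv v) (Hv v) <= D] `&` [set v | Psum lam (Hv v) <= P])%classic.
have cK : compact K.
  apply: compact_closedI; last first.
    have -> : [set v | Psum lam (Hv v) <= P]%classic =
      ((fun v => Psum lam (Hv v)) @^-1` [set x | x <= P])%classic by [].
    by apply: preimage_closed; [move=> v _; exact: cont_Psum | exact: closed_le].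
  apply: compact_closedI; last first.
    have -> : [set v | Dsum lam (Gv v) (Hv v) <= D]%classic =
      ((fun v => Dsum lam (Gv v) (Hv v)) @^-1` [set x | x <= D])%classic by [].
    by apply: preimage_closed; [move=> v _; exact: cont_Dsum | exact: closed_le].
  apply: rV_compact => j; rewrite /A; case: (fintype.split j) => i; exact: segment_compact.
have inK : forall g lh, feasible lam D P g lh -> K (emb g lh).
  move=> g lh [bx [dx px]]; split; [split|].
  - move=> j; rewrite /A /emb mxE; case: (fintype.split j) => i /=; rewrite in_itv /=.
    + by have [gp [gl _]] := bx i; rewrite (ltW gp) gl.
    + have [_ [_ hp]] := bx i; rewrite hp /=.
      apply: lh_bound; [exact: ltW | exact: hp |].
      apply: le_trans px; apply: (le_sum_one (F := fun k => Pl (lam k) (lh k))) => k.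
      exact: sqr_ge0.
  - by rewrite /= Gv_emb Hv_emb.
  - by rewrite /= Hv_emb.
have K0 : (K !=set0)%classic.
  by exists (emb g0 lh0); apply: inK; split; [exact: b0 | split; [exact: ltW d0 | exact: ltW p0]].
have [c cK' cmin] := compact_EVT_min K0 cK (continuous_subspaceT cont_obj).
move: cK'; rewrite inE => -[[cb cd] cp].
have gb : forall i, 0 <= Gv c i <= lam i.
  move=> i; have := cb (lshift L i).
  have e : fintype.split (lshift L i) = inl i := unsplitK (inl i).
  by rewrite /A e /= in_itv.
have hb : forall i, 0 <= Hv c i.
  move=> i; have := cb (rshift L i).
  have e : fintype.split (rshift L i) = inr i := unsplitK (inr i).
  by rewrite /A e /= in_itv /= => /andP[].
have pg0 : 0 < \prod_(i < L) g0 i by apply: prodr_gt0 => i _; case: (b0 i).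
have pc : \prod_(i < L) g0 i <= \prod_(i < L) Gv c i.
  have := cmin (emb g0 lh0); rewrite inE Gv_emb lerN2; apply.
  by apply: inK; split; [exact: b0 | split; [exact: ltW d0 | exact: ltW p0]].
have gpos : forall i, 0 < Gv c i.
  move=> i; have /andP[g0i _] := gb i; rewrite lt_neqAle g0i andbT.
  apply/eqP => e; move: pc; rewrite [X in _ <= X](bigD1 i) // -e /= mul0r => h.
  by move: (lt_le_trans pg0 h); rewrite ltxx.
exists (Gv c), (Hv c); split.
  split; first by move=> i; have /andP[_ ?] := gb i; split => //; split.
  by split.
move=> g' lh' f'.
have gp' : forall i, 0 < g' i by move=> i; case: f' => bx _; case: (bx i).
have hprod : \prod_(i < L) g' i <= \prod_(i < L) Gv c i.
  by have := cmin (emb g' lh'); rewrite inE Gv_emb lerN2; apply; apply: inK.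
rewrite !(rate_sum Hlam) // -!ln_prod //.
have : ln (\prod_(i < L) g' i) <= ln (\prod_(i < L) Gv c i).
  by rewrite ler_ln ?posrE //; apply: prodr_gt0 => i _.
move=> h; apply: ler_wpM2l; first by rewrite invr_ge0.
lra.
Qed.

End Exist.

Unset Implicit Arguments.
Set Strict Implicit.

Theorem theorem6 (R : realType) (L : nat) (lam : 'I_L -> R) (D P : R) :
  (forall i, 0 < lam i) ->
  strictly_feasible lam D P ->
  (* an optimal solution exists *)
  (exists g lh, optimal lam (feasible lam D P) g lh) /\
  (* (1) both constraints active *)
  (active_D lam D P -> active_P lam D P ->
   forall g lh, optimal lam (feasible lam D P) g lh ->
   exists nu1 nu2 : R, 0 < nu1 /\ 0 < nu2 /\
   exists theta : 'I_L -> R,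
     (forall i, theta_unique_sol nu1 nu2 (lam i) (theta i)) /\
     (forall i, g i = theta i / (2 * nu1) /\
                lh i = lam i / (1 + (1 - theta i) * nu1 / nu2) ^+ 2) /\
     \sum_(i < L) Dl (lam i) (g i) (lh i) = D /\
     \sum_(i < L) Pl (lam i) (lh i) = P /\
     (forall i, g i < lam i)) /\
  (* (2) distortion active, perception inactive *)
  (active_D lam D P -> inactive_P lam D P ->
   forall g lh, optimal lam (feasible lam D P) g lh ->
   exists nu1 : R, 0 < nu1 /\
     \sum_(i < L) pospart (lam i - 1 / (2 * nu1)) =
       pospart (\sum_(i < L) lam i - D) /\
     (forall i, g i = Num.min (1 / (2 * nu1)) (lam i) /\
                lh i = lam i - Num.min (1 / (2 * nu1)) (lam i))) /\
  (* (3) distortion inactive *)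
  (inactive_D lam D P ->
   (forall g lh, optimal lam (feasible lam D P) g lh ->
      (forall i, g i = lam i) /\
      \sum_(i < L) Pl (lam i) (lh i) <= P /\
      \sum_(i < L) (lam i + lh i) <= D /\ (forall i, 0 <= lh i)) /\
   (forall lh : 'I_L -> R,
      \sum_(i < L) Pl (lam i) (lh i) <= P ->
      \sum_(i < L) (lam i + lh i) <= D -> (forall i, 0 <= lh i) ->
      optimal lam (feasible lam D P) lam lh)).
Proof.
move=> Hlam sf.
split; first exact: (exist_opt Hlam sf).
split; first by move=> aD aP g lh op; exact: (case1 Hlam sf op aD aP).
split; first by move=> aD iP g lh op; exact: (case2 Hlam sf aD iP op).
by move=> iD; exact: (case3 Hlam iD).
Qed.
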